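(* Let $g:\{0,1\}^n\to\{0,1\}^{n+1}$ be a super-bit, and define $f(x)=g(x)[1\ldots n]$ and $b(x)=g(x)[n+1]$ (so $g(x)=f(x)b(x)$). Then $b$ is a super-core of $f$, and $f$ is computable by polynomial-size circuits.
   Context: $U_k$ is uniform on $\{0,1\}^k$. A generator $g:\{0,1\}^n\to\{0,1\}^{n+1}$ computable by polynomial-size circuits is a super-bit if for every nondeterministic polynomial-size circuit family $D$ (accepting iff some witness gives output 1), every polynomial $p$ and all sufficiently large $n$, $\Pr[D(U_{n+1})=1]-\Pr[D(g(U_n))=1]<1/p(n)$. A predicate $b$ computable by polynomial-size circuits is a super-core of $f:\{0,1\}^n\to\{0,1\}^{m(n)}$ if there do not exist a nondeterministic polynomial-size circuit family $\mathcal{A}_1$, a co-nondeterministic polynomial-size circuit family $\mathcal{A}_2$ (rejecting iff some witness gives output 0), a polynomial $p$ and infinitely many $n$ such that either $\Pr_{x\in\{0,1\}^n}[\mathcal{A}_1(f(x),1^n)=b(x)=0]+\tfrac12\Pr_{y\in\{0,1\}^{m(n)}}[\mathcal{A}_1(y,1^n)=1]\ge \tfrac12+\tfrac1{p(n)}$ or $\Pr_{x}[\mathcal{A}_2(f(x),1^n)=b(x)=1]+\tfrac12\Pr_{y}[\mathcal{A}_2(y,1^n)=0]\ge \tfrac12+\tfrac1{p(n)}$. *)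

(* Defs.v *)
From mathcomp Require Import all_boot all_order all_algebra.
Set Implicit Arguments. Unset Strict Implicit. Unset Printing Implicit Defensive.
Import Order.TTheory GRing.Theory Num.Theory.
Local Open Scope ring_scope.

Definition npoly := seq nat.
Definition peval (p : npoly) (n : nat) : nat :=
  \sum_(i < size p) (nth 0 p i * n ^ i)%N.
(* non-zero polynomial (hence positive for n >= 1) *)
Definition nonzero_poly (p : npoly) : bool := has (fun c => 0 < c)%N p.

(* Wires 0..k-1 are the inputs; the i-th gate defines wire k+i and may refer
   to earlier wires (references to undefined wires read as false). *)
Inductive gate :=
| GConst of bool
| GNot of nat
| GAnd of nat & nat
| GOr of nat & nat.

Record circuit := Circuit { gates : seq gate; outs : seq nat }.

Definition csize (C : circuit) : nat := size (gates C).

Definition gate_val (ws : seq bool) (g : gate) : bool :=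
  match g with
  | GConst b => b
  | GNot i => ~~ nth false ws i
  | GAnd i j => nth false ws i && nth false ws j
  | GOr i j => nth false ws i || nth false ws j
  end.

Definition wires (C : circuit) (x : seq bool) : seq bool :=
  foldl (fun ws g => rcons ws (gate_val ws g)) x (gates C).

Definition ceval (C : circuit) (x : seq bool) : seq bool :=
  map (nth false (wires C x)) (outs C).

Definition cout (C : circuit) (x : seq bool) : bool := head false (ceval C x).

Definition poly_size (C : nat -> circuit) : Prop :=
  exists p : npoly, forall n, (csize (C n) <= peval p n)%N.

Definition poly_computable (k m : nat -> nat)
  (F : forall n, (k n).-tuple bool -> (m n).-tuple bool) : Prop :=
  exists C : nat -> circuit, poly_size C /\
    forall n (x : (k n).-tuple bool), ceval (C n) x = val (F n x).

Arguments poly_computable k m F : clear implicits.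

Definition poly_computable_pred (k : nat -> nat)
  (F : forall n, (k n).-tuple bool -> bool) : Prop :=
  exists C : nat -> circuit, poly_size C /\
    forall n (x : (k n).-tuple bool), cout (C n) x = F n x.

Arguments poly_computable_pred k F : clear implicits.

(* The n-th member takes the actual input followed by a witness of length
   wit n; size and witness length are polynomially bounded. *)
Record ncfam := NCFam { ncirc : nat -> circuit; nwit : nat -> nat }.

Definition poly_ncfam (D : ncfam) : Prop :=
  exists p : npoly, forall n,
    (csize (ncirc D n) <= peval p n)%N /\ (nwit D n <= peval p n)%N.

Definition nd_out (D : ncfam) (n : nat) (x : seq bool) : bool :=
  [exists w : (nwit D n).-tuple bool, cout (ncirc D n) (x ++ w)].

Definition cond_out (D : ncfam) (n : nat) (x : seq bool) : bool :=
  ~~ [exists w : (nwit D n).-tuple bool, ~~ cout (ncirc D n) (x ++ w)].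

Definition prob (k : nat) (P : pred (k.-tuple bool)) : rat :=
  (#|P|)%:R / (2 ^ k)%:R.

Definition super_bit (g : forall n, n.-tuple bool -> n.+1.-tuple bool) : Prop :=
  poly_computable (fun n => n) (fun n => n.+1) g /\
  forall D : ncfam, poly_ncfam D ->
  forall p : npoly, nonzero_poly p ->
  exists N, forall n, (N <= n)%N ->
    prob (fun y : n.+1.-tuple bool => nd_out D n y)
    - prob (fun x : n.-tuple bool => nd_out D n (g n x))
    < 1 / (peval p n)%:R.

Definition super_core (m : nat -> nat)
  (f : forall n, n.-tuple bool -> (m n).-tuple bool)
  (b : forall n, n.-tuple bool -> bool) : Prop :=
  poly_computable_pred (fun n => n) b /\
  ~ exists (A1 A2 : ncfam) (p : npoly),
      [/\ poly_ncfam A1, poly_ncfam A2, nonzero_poly p &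
      forall N, exists n, (N <= n)%N /\
        ( prob (fun x : n.-tuple bool => ~~ nd_out A1 n (f n x) && ~~ b n x)
          + 1 / 2 * prob (fun y : (m n).-tuple bool => nd_out A1 n y)
          >= 1 / 2 + 1 / (peval p n)%:R
        \/
          prob (fun x : n.-tuple bool => cond_out A2 n (f n x) && b n x)
          + 1 / 2 * prob (fun y : (m n).-tuple bool => ~~ cond_out A2 n y)
          >= 1 / 2 + 1 / (peval p n)%:R )].

Arguments super_core m f b : clear implicits.

Definition f_of (g : forall n, n.-tuple bool -> n.+1.-tuple bool)
  (n : nat) (x : n.-tuple bool) : n.-tuple bool :=
  [tuple tnth (g n x) (widen_ord (leqnSn n) i) | i < n].

Definition b_of (g : forall n, n.-tuple bool -> n.+1.-tuple bool)
  (n : nat) (x : n.-tuple bool) : bool :=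
  tnth (g n x) ord_max.

(* Main.v *)
Require Import Defs.
From mathcomp Require Import all_boot all_order all_algebra zify ring lra.

Lemma peval_nil n : peval [::] n = 0%N.
Proof. by rewrite /peval big_ord0. Qed.

Lemma peval_cons a p n : peval (a :: p) n = (a + n * peval p n)%N.
Proof.
rewrite /peval /= big_ord_recl /= expn0 muln1; congr addn.
rewrite big_distrr; apply: eq_bigr => i _ /=.
by rewrite expnS mulnCA.
Qed.

Fixpoint padd (p q : Defs.npoly) : Defs.npoly :=
  match p, q with
  | a :: p', b :: q' => (a + b)%N :: padd p' q'
  | [::], _ => q
  | _, [::] => p
  end.

Lemma peval_padd p q n : peval (padd p q) n = (peval p n + peval q n)%N.
Proof.
elim: p q => [|a p IH] [|b q] /=; rewrite ?peval_nil ?addn0 //.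
rewrite !peval_cons IH; lia.
Qed.

Definition step (ws : seq bool) (g : gate) := rcons ws (gate_val ws g).
Definition copyg (j : nat) := GAnd j j.
Definition shiftg (L : nat) (g : gate) :=
  match g with
  | GConst b => GConst b
  | GNot i => GNot (i + L)
  | GAnd i j => GAnd (i + L) (j + L)
  | GOr i j => GOr (i + L) (j + L)
  end.

Lemma size_foldl_step ws gs : size (foldl step ws gs) = (size ws + size gs)%N.
Proof.
elim: gs ws => [|g gs IH] ws /=; first by rewrite addn0.
by rewrite IH size_rcons addSnnS.
Qed.

Lemma size_wires C x : size (wires C x) = (size x + csize C)%N.
Proof. exact: size_foldl_step. Qed.

Lemma foldl_shift pre ws gs :
  foldl step (pre ++ ws) (map (shiftg (size pre)) gs) = pre ++ foldl step ws gs.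
Proof.
elim: gs ws => [|g gs IH] ws //=.
have E : forall i, nth false (pre ++ ws) (i + size pre) = nth false ws i.
  by move=> i; rewrite nth_cat ltnNge leq_addl /= addnK.
suff E2 : gate_val (pre ++ ws) (shiftg (size pre) g) = gate_val ws g.
  have -> : step (pre ++ ws) (shiftg (size pre) g) = pre ++ step ws g.
    by rewrite /step -E2 -!cats1 catA.
  exact: IH.
by case: g => //= *; rewrite !E.
Qed.

Lemma foldl_copy x acc js : all (fun j => j < size x) js ->
  foldl step (x ++ acc) (map copyg js) = x ++ acc ++ map (nth false x) js.
Proof.
elim: js acc => [|j js IH] acc /=; first by rewrite cats0.
case/andP=> hj hjs.
have -> : step (x ++ acc) (copyg j) = x ++ rcons acc (nth false x j).
  by rewrite /step /= nth_cat hj andbb -!cats1 catA.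
by rewrite IH // -cats1 -!catA.
Qed.

Definition outgate (C : circuit) (L : nat) :=
  match outs C with o :: _ => GAnd (o + L) (o + L) | [::] => GConst false end.

Definition dgates n k C :=
  map copyg (iota 0 n) ++ map copyg (iota n.+1 k) ++
  map (shiftg (n.+1 + k)) (gates C) ++ [:: outgate C (n.+1 + k)].

Definition Mpos n k C := (n.+1 + k + (n + k + size (gates C)))%N.

Lemma dgates_wires n k C (s w : seq bool) : size s = n.+1 -> size w = k ->
  foldl step (s ++ w) (dgates n k C) =
  rcons ((s ++ w) ++ wires C (take n s ++ w)) (cout C (take n s ++ w)).
Proof.
move=> hs hw.
rewrite /dgates !foldl_cat.
have h1 : all (fun j => j < size (s ++ w)) (iota 0 n).
  by apply/allP => j; rewrite mem_iota size_cat hs; lia.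
have := @foldl_copy _ [::] _ h1; rewrite !cats0 /= => ->.
have h2 : all (fun j => j < size (s ++ w)) (iota n.+1 k).
  by apply/allP => j; rewrite mem_iota size_cat hs hw; lia.
rewrite (@foldl_copy _ _ _ h2) /=.
have -> : map (nth false (s ++ w)) (iota 0 n) = take n s.
  rewrite map_nth_iota0 ?size_cat ?hs; last lia.
  by rewrite take_cat hs ltnSn.
have -> : map (nth false (s ++ w)) (iota n.+1 k) = w.
  rewrite map_nth_iota ?size_cat ?hs ?hw; last lia.
  by rewrite drop_cat hs ltnn subnn drop0 -hw take_size.
have hL : size (s ++ w) = (n.+1 + k)%N by rewrite size_cat hs hw.
rewrite -hL foldl_shift /step; congr rcons.
rewrite /outgate /cout /ceval.
case: (outs C) => [|o os] //=.
rewrite nth_cat ltnNge leq_addl /= addnK.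
by rewrite andbb.
Qed.

Definition D1circ n k C :=
  Circuit (rcons (dgates n k C) (GOr (Mpos n k C) n)) [:: (Mpos n k C).+1].
Definition D2circ n k C :=
  Circuit (dgates n k C ++ [:: GAnd (Mpos n k C) n; GNot (Mpos n k C).+1])
    [:: (Mpos n k C).+2].

Lemma D1circ_out n k C (s w : seq bool) : size s = n.+1 -> size w = k ->
  cout (D1circ n k C) (s ++ w) = cout C (take n s ++ w) || nth false s n.
Proof.
move=> hs hw.
rewrite /cout /ceval /wires /= -cats1 foldl_cat dgates_wires //=.
set W := (s ++ w) ++ _.
have hW : size W = Mpos n k C.
  rewrite /W !size_cat size_wires size_cat size_take hs hw ltnSn /Mpos /csize; lia.
rewrite !nth_rcons !size_rcons hW ltnn eqxx /=.
have -> : (n < Mpos n k C)%N by rewrite /Mpos; lia.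
rewrite ltnn eqxx; congr orb.
by rewrite /W -catA nth_cat hs ltnSn.
Qed.

Lemma D2circ_out n k C (s w : seq bool) : size s = n.+1 -> size w = k ->
  cout (D2circ n k C) (s ++ w) = ~~ (cout C (take n s ++ w) && nth false s n).
Proof.
move=> hs hw.
rewrite /cout /ceval /wires /= foldl_cat dgates_wires //=.
set W := (s ++ w) ++ _.
have hW : size W = Mpos n k C.
  rewrite /W !size_cat size_wires size_cat size_take hs hw ltnSn /Mpos /csize; lia.
rewrite !nth_rcons !size_rcons hW !ltnn !eqxx /=.
have -> : (n < Mpos n k C)%N by rewrite /Mpos; lia.
congr (~~ (_ && _)).
by rewrite /W -catA nth_cat hs ltnSn.
Qed.

Lemma rct_proof n (y : n.-tuple bool) (c : bool) : size (rcons y c) == n.+1.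
Proof. by rewrite size_rcons size_tuple. Qed.
Definition rct n (z : n.-tuple bool * bool) : n.+1.-tuple bool :=
  Tuple (rct_proof n z.1 z.2).
Lemma tkt_proof n (s : n.+1.-tuple bool) : size (take n s) == n.
Proof. by rewrite size_take size_tuple ltnSn. Qed.
Definition rci n (s : n.+1.-tuple bool) : n.-tuple bool * bool :=
  (Tuple (tkt_proof n s), nth false s n).

Lemma take_rcons_t n (y : n.-tuple bool) c : take n (rcons y c) = y.
Proof. by rewrite -cats1 take_cat size_tuple ltnn subnn take0 cats0. Qed.
Lemma nth_rcons_t n (y : n.-tuple bool) c : nth false (rcons y c) n = c.
Proof. by rewrite nth_rcons size_tuple ltnn eqxx. Qed.

Lemma rct_bij n : bijective (@rct n).
Proof.
exists (@rci n).
  case=> y c; rewrite /rci /=; congr pair; last exact: nth_rcons_t.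
  by apply: val_inj; rewrite /= take_rcons_t.
move=> s; apply: val_inj => /=.
have hs : size s = n.+1 by rewrite size_tuple.
rewrite -cats1 -[RHS](cat_take_drop n); congr cat.
by rewrite (drop_nth false) ?hs // drop_oversize ?hs.
Qed.

Lemma count_split n (Q : pred (seq bool)) (c : bool) :
  #|[pred s : n.+1.-tuple bool | Q (take n s) || (nth false s n == c)]| =
  (2 ^ n + #|[pred y : n.-tuple bool | Q y]|)%N.
Proof.
rewrite -sum1_card (reindex (@rct n)) /=; last exact: onW_bij (rct_bij n).
rewrite big_mkcond /= -(pair_bigA _ (fun (y : n.-tuple bool) (b : bool) => if Q (take n (rcons y b)) || (nth false (rcons y b) n == c) then 1 else 0)%N) /=.
under eq_bigr => y _ do rewrite big_bool /= !take_rcons_t !nth_rcons_t.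
transitivity (\sum_(i : n.-tuple bool) (1 + (if Q i then 1 else 0))%N).
  by apply: eq_bigr => i _; case: c; case: (Q i).
rewrite big_split /= sum1_card card_tuple card_bool -big_mkcond /= sum1_card.
by apply: congr1; apply: eq_card => y; rewrite !inE.
Qed.
Import Order.TTheory GRing.Theory Num.Theory.
Local Open Scope ring_scope.

Lemma prob_ext k (P P' : pred (k.-tuple bool)) :
  (forall x, P x = P' x) -> prob P = prob P'.
Proof. by move=> h; rewrite /prob (eq_card (B:=P')) // => x; rewrite !unfold_in /= h. Qed.

Lemma prob_compl k (P : pred (k.-tuple bool)) :
  prob P + prob (fun x => ~~ P x) = 1.
Proof.
rewrite /prob -mulrDl -natrD.
have -> : (#|P| + #|(fun x => ~~ P x)|)%N = (#|P| + #|[predC P]|)%N.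
  congr addn; apply: eq_card => x; rewrite !inE unfold_in.
rewrite cardC card_tuple card_bool.
by rewrite divff // pnatr_eq0 expn_eq0.
Qed.

Lemma prob_split n (Q : pred (seq bool)) (c : bool) :
  prob (fun s : n.+1.-tuple bool => Q (take n s) || (nth false s n == c)) =
  1 / 2 + 1 / 2 * prob (fun y : n.-tuple bool => Q y).
Proof.
rewrite /prob.
have -> : #|(fun s : n.+1.-tuple bool => Q (take n s) || (nth false s n == c))| =
  #|[pred s : n.+1.-tuple bool | Q (take n s) || (nth false s n == c)]|.
  by apply: eq_card => x; rewrite !inE ?unfold_in.
rewrite count_split.
have -> : #|(fun y : n.-tuple bool => Q y)| = #|[pred y : n.-tuple bool | Q y]|.
  by apply: eq_card => x; rewrite !inE ?unfold_in.
have hN : (2 ^ n)%:R != 0 :> rat by rewrite pnatr_eq0 expn_eq0.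
rewrite natrD expnS natrM.
field; exact: hN.
Qed.

Section G.
Variable g : forall n, n.-tuple bool -> n.+1.-tuple bool.

Lemma f_of_val n x : val (@f_of g n x) = take n (val (g n x)).
Proof.
apply: (@eq_from_nth _ false); first by rewrite size_tuple size_take size_tuple ltnSn.
move=> i; rewrite size_tuple => hi.
rewrite -[i]/(nat_of_ord (Ordinal hi)) -tnth_nth tnth_mktuple nth_take //.
by rewrite (tnth_nth false).
Qed.

Lemma g_split n x : val (g n x) = val (@f_of g n x) ++ [:: @b_of g n x].
Proof.
have hs : size (g n x) = n.+1 by rewrite size_tuple.
rewrite f_of_val /b_of (tnth_nth false) /=.
rewrite -[in LHS](cat_take_drop n (val (g n x))); congr cat.
by rewrite (drop_nth false) ?hs // drop_oversize ?hs.
Qed.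
End G.

Lemma size_dgates n k C : size (dgates n k C) = (n + k + csize C + 1)%N.
Proof. by rewrite /dgates !size_cat !size_map !size_iota /= /csize; lia. Qed.

Lemma csize_D1 n k C : csize (D1circ n k C) = (n + k + csize C + 2)%N.
Proof. by rewrite {1}/csize /D1circ /= size_rcons size_dgates; lia. Qed.
Lemma csize_D2 n k C : csize (D2circ n k C) = (n + k + csize C + 3)%N.
Proof. by rewrite {1}/csize /D2circ /= size_cat size_dgates /=; lia. Qed.

Definition D1fam (A : ncfam) := NCFam (fun n => D1circ n (nwit A n) (ncirc A n)) (nwit A).
Definition D2fam (A : ncfam) := NCFam (fun n => D2circ n (nwit A n) (ncirc A n)) (nwit A).

Lemma poly_D1 A : poly_ncfam A -> poly_ncfam (D1fam A).
Proof.
case=> p hp; exists (padd [:: 3; 1] (padd p p))%N => n.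
rewrite peval_padd !peval_cons peval_padd peval_nil /= muln0 addn0 muln1.
have [h1 h2] := hp n; split; rewrite /= ?csize_D1 ?csize_D2; lia.
Qed.

Lemma poly_D2 A : poly_ncfam A -> poly_ncfam (D2fam A).
Proof.
case=> p hp; exists (padd [:: 3; 1] (padd p p))%N => n.
rewrite peval_padd !peval_cons peval_padd peval_nil /= muln0 addn0 muln1.
have [h1 h2] := hp n; split; rewrite /= ?csize_D1 ?csize_D2; lia.
Qed.

Lemma nd_D1 A n (s : n.+1.-tuple bool) :
  nd_out (D1fam A) n s = nd_out A n (take n s) || nth false s n.
Proof.
rewrite /nd_out /=; apply/existsP/orP.
  case=> w; rewrite D1circ_out ?size_tuple // => /orP [h|h]; last by right.
  by left; apply/existsP; exists w.
case=> [/existsP [w hw] | h].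
  by exists w; rewrite D1circ_out ?size_tuple // hw.
by exists (nseq_tuple (nwit A n) false); rewrite D1circ_out ?size_tuple // h orbT.
Qed.

Lemma nd_D2 A n (s : n.+1.-tuple bool) :
  nd_out (D2fam A) n s = ~~ cond_out A n (take n s) || ~~ nth false s n.
Proof.
rewrite /nd_out /cond_out negbK /=; apply/existsP/orP.
  case=> w; rewrite D2circ_out ?size_tuple // negb_and => /orP [h|h]; last by right.
  by left; apply/existsP; exists w.
case=> [/existsP [w hw] | h].
  by exists w; rewrite D2circ_out ?size_tuple // negb_and hw.
by exists (nseq_tuple (nwit A n) false); rewrite D2circ_out ?size_tuple // negb_and h orbT.
Qed.

Lemma take_g g n x : take n (val (g n x)) = val (@f_of g n x).
Proof. by rewrite f_of_val. Qed.
Lemma nth_g g n x : nth false (val (g n x)) n = @b_of g n x.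
Proof. by rewrite g_split nth_cat size_tuple ltnn subnn. Qed.

Theorem proposition6p4 (g : forall n, n.-tuple bool -> n.+1.-tuple bool) :
  super_bit g ->
  super_core (fun n => n) (f_of g) (b_of g) /\
  poly_computable (fun n => n) (fun n => n) (f_of g).
Proof.
case=> [[Cg [[pg hpg] hCg]] H].
split; last first.
  exists (fun n => Circuit (gates (Cg n)) (take n (outs (Cg n)))); split.
    by exists pg => n; exact: hpg n.
  move=> n x; rewrite /ceval /= map_take.
  by rewrite -/(ceval (Cg n) x) hCg; exact/esym/f_of_val.
split.
  exists (fun n => Circuit (gates (Cg n)) [:: nth 0%N (outs (Cg n)) n]); split.
    by exists pg.
  move=> n x.
  have hsz : size (outs (Cg n)) = n.+1.
    by have := congr1 size (hCg n x); rewrite size_map size_tuple.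
  rewrite /cout /ceval /= -(nth_map 0%N false) ?hsz //.
  by rewrite -/(ceval (Cg n) x) hCg /b_of (tnth_nth false).
case=> A1 [A2 [p [hA1 hA2 hp Hinf]]].
have [N1 hN1] := H _ (@poly_D1 _ hA1) p hp.
have [N2 hN2] := H _ (@poly_D2 _ hA2) p hp.
have [n [hn Hc]] := Hinf (maxn N1 N2).
case: Hc => Hc.
- have := hN1 n (leq_trans (leq_maxl _ _) hn).
  rewrite (@prob_ext n.+1 _ (fun s : n.+1.-tuple bool => nd_out A1 n (take n s) || (nth false s n == true))); last by move=> s; rewrite nd_D1 eqb_id.
  rewrite prob_split.
  rewrite (@prob_ext n (fun x : n.-tuple bool => nd_out (D1fam A1) n (g n x)) (fun x : n.-tuple bool => ~~ (~~ nd_out A1 n (@f_of g n x) && ~~ @b_of g n x))); last by move=> x; rewrite nd_D1 take_g nth_g negb_and !negbK.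
  have hc := @prob_compl n (fun x : n.-tuple bool => ~~ nd_out A1 n (@f_of g n x) && ~~ @b_of g n x).
  move: Hc hc => /=; lra.
- have := hN2 n (leq_trans (leq_maxr _ _) hn).
  rewrite (@prob_ext n.+1 _ (fun s : n.+1.-tuple bool => ~~ cond_out A2 n (take n s) || (nth false s n == false))); last by move=> s; rewrite nd_D2 eqbF_neg.
  rewrite (@prob_split n (fun t : seq bool => ~~ cond_out A2 n t) false).
  rewrite (@prob_ext n (fun x : n.-tuple bool => nd_out (D2fam A2) n (g n x)) (fun x : n.-tuple bool => ~~ (cond_out A2 n (@f_of g n x) && @b_of g n x))); last by move=> x; rewrite nd_D2 take_g nth_g negb_and.
  have hc := @prob_compl n (fun x : n.-tuple bool => cond_out A2 n (@f_of g n x) && @b_of g n x).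
  move: Hc hc => /=; lra.
Qed.
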